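(* Under the assumptions and notation of Theorem 3.1, fix $\varphi\in D$ and let $\Psi_t(s):=\big\|[F(s/m(t))]^{m(t)}\varphi-T_s\varphi\big\|_X$. Then for each $\varepsilon>0$ there exist $t_\varepsilon>0$ and $s_\varepsilon>0$ such that $\Psi_t(s)/s<\varepsilon$ for all $t\in(0,t_\varepsilon]$ and all $s\in(0,s_\varepsilon]$.
   Context: $X$ is a Banach space; $(T_t)_{t\ge0}$ a strongly continuous contraction semigroup on $X$ with generator $(L,\mathrm{Dom}(L))$; $(F(t))_{t\ge0}$ a strongly continuous family of contractions on $X$ with $F(0)=\mathrm{Id}$, Chernoff equivalent to $(T_t)$, i.e. there is a core $D\subset\mathrm{Dom}(L)$ for $L$ with $\lim_{t\to0}\|t^{-1}(F(t)\varphi-\varphi)-L\varphi\|_X=0$ for $\varphi\in D$ (and consequently $[F(\tau/n)]^n\psi\to T_\tau\psi$ uniformly for $\tau$ in compact intervals, for every $\psi\in X$); $m:(0,\infty)\to\mathbb N_0$ monotone with $m(t)\to\infty$ as $t\to0$; $B^0:=\mathrm{Id}$. *)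

(* Defs.v *)
From Stdlib Require Import Reals.
Open Scope R_scope.

Record Banach := {
  car :> Type;
  zero : car;
  add : car -> car -> car;
  opp : car -> car;
  scal : R -> car -> car;
  norm : car -> R;
  add_assoc : forall x y z, add x (add y z) = add (add x y) z;
  add_comm : forall x y, add x y = add y x;
  add_zero : forall x, add x zero = x;
  add_opp : forall x, add x (opp x) = zero;
  scal_assoc : forall a b x, scal a (scal b x) = scal (a * b) x;
  scal_one : forall x, scal 1 x = x;
  scal_distr_l : forall a x y, scal a (add x y) = add (scal a x) (scal a y);
  scal_distr_r : forall a b x, scal (a + b) x = add (scal a x) (scal b x);
  norm_eq_zero : forall x, norm x = 0 -> x = zero;
  norm_triangle : forall x y, norm (add x y) <= norm x + norm y;
  norm_scal : forall a x, norm (scal a x) = Rabs a * norm x;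
  complete : forall u : nat -> car,
    (forall e, 0 < e -> exists N, forall n p, (N <= n)%nat -> (N <= p)%nat ->
        norm (add (u n) (opp (u p))) < e) ->
    exists l, forall e, 0 < e -> exists N, forall n, (N <= n)%nat ->
        norm (add (u n) (opp l)) < e
}.

Arguments zero {_}.
Arguments add {_}.
Arguments opp {_}.
Arguments scal {_}.
Arguments norm {_}.

Definition sub {X : Banach} (x y : X) : X := add x (opp y).

Definition linear_contraction {X : Banach} (A : X -> X) : Prop :=
  (forall x y, A (add x y) = add (A x) (A y)) /\
  (forall a x, A (scal a x) = scal a (A x)) /\
  (forall x, norm (A x) <= norm x).

Definition strongly_continuous_contraction_family {X : Banach} (F : R -> X -> X) : Prop :=
  (forall t, 0 <= t -> linear_contraction (F t)) /\
  (forall x t0, 0 <= t0 -> forall e, 0 < e -> exists d, 0 < d /\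
     forall t, 0 <= t -> Rabs (t - t0) < d -> norm (sub (F t x) (F t0 x)) < e).

Definition C0_contraction_semigroup {X : Banach} (T : R -> X -> X) : Prop :=
  strongly_continuous_contraction_family T /\
  (forall x, T 0 x = x) /\
  (forall t s x, 0 <= t -> 0 <= s -> T (t + s) x = T t (T s x)).

Definition lim0plus {X : Banach} (g : R -> X) (y : X) : Prop :=
  forall e, 0 < e -> exists d, 0 < d /\
    forall t, 0 < t -> t < d -> norm (sub (g t) y) < e.

Definition diff_quot {X : Banach} (F : R -> X -> X) (x : X) : R -> X :=
  fun t => scal (/ t) (sub (F t x) x).

Definition is_generator {X : Banach} (T : R -> X -> X) (DomL : X -> Prop) (L : X -> X) : Prop :=
  (forall x, DomL x <-> exists y, lim0plus (diff_quot T x) y) /\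
  (forall x, DomL x -> lim0plus (diff_quot T x) (L x)).

Definition is_core {X : Banach} (DomL : X -> Prop) (L : X -> X) (D : X -> Prop) : Prop :=
  (forall x, D x -> DomL x) /\
  (forall x, DomL x -> forall e, 0 < e -> exists y, D y /\
     norm (sub y x) < e /\ norm (sub (L y) (L x)) < e).

Fixpoint powop {X : Banach} (B : X -> X) (n : nat) (x : X) : X :=
  match n with
  | O => x
  | S k => B (powop B k x)
  end.

(* Main.v *)
Require Import Defs.
From Stdlib Require Import Reals Lra Lia.
Open Scope R_scope.

Arguments add_assoc {_}. Arguments add_comm {_}. Arguments add_zero {_}.
Arguments add_opp {_}. Arguments scal_assoc {_}. Arguments scal_one {_}.
Arguments scal_distr_l {_}. Arguments scal_distr_r {_}. Arguments norm_triangle {_}.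
Arguments norm_scal {_}.
Section A.
Variable X : Banach.
Implicit Types x y z a b c e : X.
Implicit Types A : X -> X.

Lemma add_zero_l x : add zero x = x.
Proof. rewrite add_comm; apply add_zero. Qed.

Lemma idem_zero a : add a a = a -> a = zero.
Proof.
  intro H. transitivity (add (add a a) (opp a)).
  - rewrite <- add_assoc, add_opp, add_zero. reflexivity.
  - rewrite H. apply add_opp.
Qed.

Lemma scal_zero x : scal 0 x = zero.
Proof. apply idem_zero. rewrite <- scal_distr_r. f_equal; ring. Qed.

Lemma opp_unique x y : add x y = zero -> y = opp x.
Proof.
  intro H. rewrite <- (add_zero y), <- (add_opp x), add_assoc.
  rewrite (add_comm y x), H, add_zero_l. reflexivity.
Qed.

Lemma opp_scal x : opp x = scal (-1) x.
Proof.
  symmetry; apply opp_unique. rewrite <- (scal_one x) at 1.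
  rewrite <- scal_distr_r. replace (1 + -1) with 0 by ring. apply scal_zero.
Qed.

Lemma norm_zero : norm (@zero X) = 0.
Proof. rewrite <- (scal_zero zero), norm_scal, Rabs_R0; ring. Qed.

Lemma opp_add x y : opp (add x y) = add (opp x) (opp y).
Proof. rewrite !opp_scal, scal_distr_l. reflexivity. Qed.

Lemma opp_opp x : opp (opp x) = x.
Proof. symmetry. apply opp_unique. rewrite add_comm. apply add_opp. Qed.

Lemma add4 a b c e : add (add a b) (add c e) = add (add a c) (add b e).
Proof.
  rewrite <- !add_assoc. f_equal. rewrite !add_assoc. f_equal. apply add_comm.
Qed.

Lemma scal_opp h x : scal h (opp x) = opp (scal h x).
Proof. rewrite !opp_scal, !scal_assoc. f_equal; ring. Qed.

Definition dd x y := norm (sub x y).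

Lemma dd_tri x y z : dd x z <= dd x y + dd y z.
Proof.
  unfold dd, sub. replace (add x (opp z)) with (add (add x (opp y)) (add y (opp z))).
  apply norm_triangle.
  rewrite add_assoc. f_equal. rewrite <- add_assoc, (add_comm (opp y) y), add_opp, add_zero.
  reflexivity.
Qed.

Lemma dd_sym x y : dd x y = dd y x.
Proof.
  unfold dd, sub. replace (add y (opp x)) with (opp (add x (opp y))).
  rewrite (opp_scal (add x (opp y))), norm_scal. replace (Rabs (-1)) with 1. ring.
  rewrite Rabs_left; lra.
  rewrite opp_add, opp_opp, add_comm. reflexivity.
Qed.

Lemma dd_add a b c e : dd (add a b) (add c e) <= dd a c + dd b e.
Proof.
  unfold dd, sub. rewrite opp_add, add4. apply norm_triangle.
Qed.

Lemma dd_scal h x y : dd (scal h x) (scal h y) = Rabs h * dd x y.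
Proof.
  unfold dd, sub. rewrite <- scal_opp, <- scal_distr_l, norm_scal. reflexivity.
Qed.

Lemma dd_self x : dd x x = 0.
Proof. unfold dd, sub. rewrite add_opp. apply norm_zero. Qed.

Lemma dd_ge0 x y : 0 <= dd x y.
Proof.
  assert (H := dd_tri x y x). rewrite dd_self, (dd_sym y x) in H. lra.
Qed.

Lemma dd_quot x y z h : h <> 0 ->
  dd x (add y (scal h z)) = Rabs h * dd (scal (/ h) (sub x y)) z.
Proof.
  intro Hh. rewrite <- dd_scal, scal_assoc, Rinv_r, scal_one by exact Hh.
  unfold dd, sub. rewrite opp_add, add_assoc. reflexivity.
Qed.

Lemma lc_opp A : linear_contraction A -> forall x, A (opp x) = opp (A x).
Proof. intros [H1 [H2 H3]] x. rewrite !opp_scal, H2. reflexivity. Qed.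

Lemma lc_dd A : linear_contraction A -> forall x y, dd (A x) (A y) <= dd x y.
Proof.
  intros HA x y. unfold dd, sub. rewrite <- lc_opp by exact HA.
  destruct HA as [H1 [H2 H3]]. rewrite <- H1. apply H3.
Qed.

Lemma powop_lc A n : linear_contraction A -> linear_contraction (powop A n).
Proof.
  intro HA. induction n as [|n IH]; simpl.
  - split; [|split]; intros; auto; lra.
  - destruct HA as [H1 [H2 H3]]. destruct IH as [I1 [I2 I3]].
    split; [|split]; intros.
    + rewrite I1, H1; reflexivity.
    + rewrite I2, H2; reflexivity.
    + eapply Rle_trans; [apply H3| apply I3].
Qed.

Lemma powop_S' A n x : powop A (S n) x = powop A n (A x).
Proof. induction n as [|n IH]; simpl; auto. simpl in IH. rewrite IH. reflexivity. Qed.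

Lemma powop_drift A psi : linear_contraction A -> forall j,
  dd (powop A j psi) psi <= INR j * dd (A psi) psi.
Proof.
  intros HA j. induction j as [|j IH].
  - simpl. rewrite dd_self. lra.
  - rewrite powop_S', S_INR.
    eapply Rle_trans; [apply (dd_tri _ (powop A j psi))|].
    assert (H := lc_dd _ (powop_lc A j HA) (A psi) psi). lra.
Qed.

Lemma main_ind A phi psi h d1 d2 m : linear_contraction A -> 0 <= h ->
  dd (A phi) (add phi (scal h psi)) <= h * d1 ->
  (forall j, (j < m)%nat -> dd (powop A j psi) psi <= d2) ->
  forall k, (k <= m)%nat ->
  dd (powop A k phi) (add phi (scal (INR k * h) psi)) <= INR k * h * (d1 + d2).
Proof.
  intros HA Hh H1 H2 k. induction k as [|k IH]; intro Hk.
  - simpl. rewrite Rmult_0_l, scal_zero, add_zero, dd_self. lra.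
  - rewrite powop_S', S_INR.
    replace ((INR k + 1) * h) with (INR k * h + h) by ring.
    rewrite scal_distr_r, add_assoc.
    eapply Rle_trans; [apply (dd_tri _ (powop A k (add phi (scal h psi))))|].
    assert (E1 := lc_dd _ (powop_lc A k HA) (A phi) (add phi (scal h psi))).
    destruct (powop_lc A k HA) as [P1 [P2 P3]].
    rewrite P1, P2 in *.
    assert (E2 := dd_add (powop A k phi) (scal h (powop A k psi))
                    (add phi (scal (INR k * h) psi)) (scal h psi)).
    rewrite dd_scal, Rabs_pos_eq in E2 by exact Hh.
    assert (E3 := IH ltac:(lia)).
    assert (E4 := H2 k ltac:(lia)).
    assert (0 <= h * (d2 - dd (powop A k psi) psi)) by (apply Rmult_le_pos; lra).
    lra.
Qed.
End A.
Arguments dd {X}.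


Theorem lemma4 (X : Banach) (T : R -> X -> X) (DomL : X -> Prop) (L : X -> X)
  (F : R -> X -> X) (D : X -> Prop) (m : R -> nat)
  (HT : C0_contraction_semigroup T)
  (HL : is_generator T DomL L)
  (HF : strongly_continuous_contraction_family F)
  (HF0 : forall x, F 0 x = x)
  (HD : is_core DomL L D)
  (Hchernoff : forall phi, D phi -> lim0plus (diff_quot F phi) (L phi))
  (Hprod : forall psi b, 0 <= b -> forall e, 0 < e -> exists N, forall n, (N <= n)%nat ->
     forall tau, 0 <= tau -> tau <= b ->
       norm (sub (powop (F (tau / INR n)) n psi) (T tau psi)) < e)
  (Hm_mono : (forall t1 t2, 0 < t1 -> t1 <= t2 -> (m t2 <= m t1)%nat) \/
             (forall t1 t2, 0 < t1 -> t1 <= t2 -> (m t1 <= m t2)%nat))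
  (Hm_inf : forall N, exists d, 0 < d /\ forall t, 0 < t -> t < d -> (N <= m t)%nat)
  (phi : X) (Hphi : D phi) :
  forall eps, 0 < eps -> exists t_eps, 0 < t_eps /\ exists s_eps, 0 < s_eps /\
    forall t s, 0 < t -> t <= t_eps -> 0 < s -> s <= s_eps ->
      norm (sub (powop (F (s / INR (m t))) (m t) phi) (T s phi)) / s < eps.
Proof.
  intros eps Heps.
  set (psi := L phi).
  assert (Hgen : lim0plus (diff_quot T phi) psi).
  { apply (proj2 HL). apply (proj1 HD). exact Hphi. }
  destruct (Hchernoff phi Hphi (eps/4) ltac:(lra)) as [d1 [Hd1 H1]].
  destruct (Hgen (eps/4) ltac:(lra)) as [d3 [Hd3 H3]].
  destruct HT as [[_ HTc] [HT0 _]].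
  destruct (HTc psi 0 (Rle_refl 0) (eps/8) ltac:(lra)) as [dT [HdT HTd]].
  destruct (Hprod psi 1 ltac:(lra) (eps/8) ltac:(lra)) as [N HN].
  assert (HN1 : 0 < INR N + 1) by (pose proof (pos_INR N); lra).
  assert (Hepsn : 0 < eps / (8 * (INR N + 1))).
  { apply Rdiv_lt_0_compat; lra. }
  destruct HF as [HFlc HFc].
  destruct (HFc psi 0 (Rle_refl 0) _ Hepsn) as [dF [HdF HFd]].
  destruct (Hm_inf 1%nat) as [dm [Hdm Hm1]].
  exists (dm/2). split; [lra|].
  set (s0 := Rmin (Rmin (Rmin d1 d3) (Rmin dT dF)) 1).
  assert (Hs0 : 0 < s0 /\ s0 <= d1 /\ s0 <= d3 /\ s0 <= dT /\ s0 <= dF /\ s0 <= 1).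
  { unfold s0.
    pose proof (Rmin_l d1 d3). pose proof (Rmin_r d1 d3).
    pose proof (Rmin_l dT dF). pose proof (Rmin_r dT dF).
    pose proof (Rmin_l (Rmin d1 d3) (Rmin dT dF)). pose proof (Rmin_r (Rmin d1 d3) (Rmin dT dF)).
    pose proof (Rmin_l (Rmin (Rmin d1 d3) (Rmin dT dF)) 1).
    pose proof (Rmin_r (Rmin (Rmin d1 d3) (Rmin dT dF)) 1).
    assert (0 < Rmin d1 d3) by (apply Rmin_glb_lt; lra).
    assert (0 < Rmin dT dF) by (apply Rmin_glb_lt; lra).
    assert (0 < Rmin (Rmin d1 d3) (Rmin dT dF)) by (apply Rmin_glb_lt; lra).
    assert (0 < Rmin (Rmin (Rmin d1 d3) (Rmin dT dF)) 1) by (apply Rmin_glb_lt; lra).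
    repeat split; lra. }
  exists (s0/2). split; [lra|].
  intros t s Ht Htle Hs Hsle.
  assert (Hm : (1 <= m t)%nat) by (apply Hm1; lra).
  set (M := m t) in *.
  assert (HMr : 1 <= INR M) by (apply (le_INR 1); exact Hm).
  set (h := s / INR M).
  assert (Hh : 0 < h) by (unfold h; apply Rdiv_lt_0_compat; lra).
  assert (HMh : INR M * h = s) by (unfold h; field; lra).
  assert (Hhs : h <= s) by nra.
  assert (HA : linear_contraction (F h)) by (apply HFlc; lra).
  assert (Hdrift : forall j, (j < M)%nat -> dd (powop (F h) j psi) psi <= eps/4).
  { intros j Hj.
    assert (Hjh : INR j * h <= s).
    { rewrite <- HMh. apply Rmult_le_compat_r; [lra|]. apply le_INR; lia. }
    destruct (Nat.le_gt_cases j N) as [HjN|HjN].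
    - eapply Rle_trans; [apply powop_drift; exact HA|].
      assert (HFh : dd (F h psi) psi < eps / (8 * (INR N + 1))).
      { unfold dd. rewrite <- (HF0 psi) at 2. apply HFd; [lra|].
        rewrite Rminus_0_r, Rabs_pos_eq; lra. }
      assert (HjN' : INR j <= INR N) by (apply le_INR; exact HjN).
      assert (Hj0 : 0 <= INR j) by apply pos_INR.
      assert (0 <= dd (F h psi) psi) by apply dd_ge0.
      apply Rle_trans with (INR N * (eps / (8 * (INR N + 1)))).
      + apply Rle_trans with (INR N * dd (F h psi) psi).
        * apply Rmult_le_compat_r; lra.
        * apply Rmult_le_compat_l; lra.
      + apply Rle_trans with ((INR N + 1) * (eps / (8 * (INR N + 1)))).
        * apply Rmult_le_compat_r; lra.
        * replace ((INR N + 1) * (eps / (8 * (INR N + 1)))) with (eps/8) by (field; lra). lra.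
    - set (tau := INR j * h).
      assert (Hj0 : 0 < INR j) by (apply lt_0_INR; lia).
      assert (Htau : tau / INR j = h) by (unfold tau; field; lra).
      assert (Htau0 : 0 <= tau) by (unfold tau; nra).
      assert (HP := HN j ltac:(lia) tau Htau0 ltac:(unfold tau in *; lra)).
      rewrite Htau in HP.
      assert (HT1 : dd (T tau psi) psi < eps/8).
      { unfold dd. rewrite <- (HT0 psi) at 2. apply HTd; [lra|].
        rewrite Rminus_0_r, Rabs_pos_eq; unfold tau in *; lra. }
      eapply Rle_trans; [apply (dd_tri _ _ (T tau psi))|].
      unfold dd at 1. lra. }
  assert (Hstep : dd (F h phi) (add phi (scal h psi)) <= h * (eps/4)).
  { rewrite dd_quot by lra. rewrite Rabs_pos_eq by lra.
    apply Rmult_le_compat_l; [lra|]. left. apply H1; lra. }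
  assert (Hmain := main_ind X (F h) phi psi h (eps/4) (eps/4) M HA ltac:(lra)
                     Hstep Hdrift M (Nat.le_refl M)).
  rewrite HMh in Hmain.
  assert (Hg : dd (add phi (scal s psi)) (T s phi) < s * (eps/4)).
  { rewrite dd_sym, dd_quot by lra. rewrite Rabs_pos_eq by lra.
    apply Rmult_lt_compat_l; [lra|]. apply H3; lra. }
  assert (Htot := dd_tri X (powop (F h) M phi) (add phi (scal s psi)) (T s phi)).
  unfold dd in Htot. fold h.
  apply (Rmult_lt_reg_r s); [lra|].
  unfold Rdiv. rewrite Rmult_assoc, Rinv_l, Rmult_1_r by lra.
  unfold dd in *. nra.
Qed.
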